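(* Let $X$ be a Tychonoff space. Every non-zero minimal ideal $I$ of $T''(X)$ is generated by an idempotent $e\in T''(X)$ such that $X\setminus Z(e)$ contains exactly one element.
   Context: $C(X)$ is the ring of real-valued continuous functions on $X$; a cozero set is a set $\{x: h(x)\neq 0\}$ with $h\in C(X)$. $T''(X)$ is the ring (under pointwise operations) of all functions $f\colon X\to\mathbb{R}$ for which there is a dense cozero set $U$ of $X$ with $f|_U$ continuous. $Z(f)=\{x\in X: f(x)=0\}$. A minimal ideal is a non-zero ideal not properly containing any non-zero ideal. *)

(* Defs.v *)
From HB Require Import structures.
From mathcomp Require Import all_boot all_order all_algebra.
From mathcomp Require Import all_classical all_reals all_analysis.
Set Implicit Arguments. Unset Strict Implicit. Unset Printing Implicit Defensive.
Import Order.TTheory GRing.Theory Num.Theory.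
Import numFieldTopology.Exports numFieldNormedType.Exports.
Local Open Scope classical_set_scope.
Local Open Scope ring_scope.

Definition tychonoff_space (R : realType) (X : topologicalType) : Prop :=
  hausdorff_space X /\
  forall (a : X) (B : set X), closed B -> ~ B a ->
    exists f : X -> R, [/\ continuous f, f a = 0 & forall b, B b -> f b = 1].

Definition coz (R : realType) (X : topologicalType) (h : X -> R) : set X :=
  [set x | h x != 0].

Definition Zset (R : realType) (X : Type) (f : X -> R) : set X :=
  [set x | f x = 0].

(* f belongs to T''(X): continuous on some dense cozero set *)
Definition Tpp (R : realType) (X : topologicalType) (f : X -> R) : Prop :=
  exists h : X -> R, [/\ continuous h, dense (coz h) &
                        {within coz h, continuous f}].

Definition Tpp_ideal (R : realType) (X : topologicalType) (I : set (X -> R)) : Prop :=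
  [/\ (forall f, I f -> Tpp f),
      I (fun _ => 0),
      (forall f g, I f -> I g -> I (fun x => f x + g x)),
      (forall f, I f -> I (fun x => - f x)) &
      (forall h f, Tpp h -> I f -> I (fun x => h x * f x))].

Definition nonzero_fset (R : realType) (X : Type) (I : set (X -> R)) : Prop :=
  exists f, I f /\ f <> (fun _ => 0).

Definition Tpp_minimal_ideal (R : realType) (X : topologicalType)
    (I : set (X -> R)) : Prop :=
  [/\ Tpp_ideal I, nonzero_fset I &
      forall J : set (X -> R), Tpp_ideal J -> nonzero_fset J -> J `<=` I -> J = I].

Definition Tpp_gen (R : realType) (X : topologicalType) (e : X -> R) : set (X -> R) :=
  [set g | exists h, Tpp h /\ g = (fun x => h x * e x)].

(* Main.v *)
Require Import Defs.
From HB Require Import structures.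
From mathcomp Require Import all_boot all_order all_algebra.
From mathcomp Require Import all_classical all_reals all_analysis.
From mathcomp Require Import ring.
Import Order.TTheory GRing.Theory Num.Theory.
Import numFieldTopology.Exports numFieldNormedType.Exports.
Local Open Scope classical_set_scope.
Local Open Scope ring_scope.

Section Helpers.
Variables (R : realType) (X : topologicalType).

Lemma coz_open (h : X -> R) : continuous h -> open (coz h).
Proof.
move=> hc.
have -> : coz h = h @^-1` (~` [set 0]).
  by apply/seteqP; split=> x /=; rewrite /coz /=; move/eqP.
apply: open_comp => [x _|]; first exact: hc.
rewrite openC; apply: accessible_closed_set1; apply: hausdorff_accessible.
exact: norm_hausdorff.
Qed.

Lemma Tpp_cont (f : X -> R) : continuous f -> Tpp f.
Proof.
move=> fc; exists (fun _ => 1); split.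
- by move=> x; exact: cst_continuous.
- have -> : coz (fun _ : X => (1:R)) = setT.
    by apply/seteqP; split=> x //= _; rewrite /coz /= oner_neq0.
  by move=> O [x Ox] _; exists x.
- exact: continuous_subspaceT.
Qed.

Lemma Tpp2 (op : R -> R -> R) (f g : X -> R) :
  (forall (Y : topologicalType) (a b : Y -> R), continuous a -> continuous b ->
     continuous (fun y => op (a y) (b y))) ->
  Tpp f -> Tpp g -> Tpp (fun x => op (f x) (g x)).
Proof.
move=> opc [h1 [c1 d1 f1]] [h2 [c2 d2 f2]].
exists (fun x => h1 x * h2 x); split.
- by move=> x; apply: (continuousM (c1 x) (c2 x)).
- have -> : coz (fun x => h1 x * h2 x) = coz h1 `&` coz h2.
    apply/seteqP; split=> x /=; rewrite /coz /= mulf_eq0 negb_or.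
      by move/andP.
    by move=> [-> ->].
  by apply: denseI => //; exact: coz_open.
- have sub1 : coz (fun x => h1 x * h2 x) `<=` coz h1.
    by move=> x; rewrite /coz /= mulf_eq0 negb_or => /andP[].
  have sub2 : coz (fun x => h1 x * h2 x) `<=` coz h2.
    by move=> x; rewrite /coz /= mulf_eq0 negb_or => /andP[].
  have F1 := continuous_subspaceW sub1 f1.
  have F2 := continuous_subspaceW sub2 f2.
  exact: (opc _ _ _ F1 F2).
Qed.

Lemma TppM (f g : X -> R) : Tpp f -> Tpp g -> Tpp (fun x => f x * g x).
Proof.
apply: Tpp2 => Y a b ca cb y; exact: (continuousM (ca y) (cb y)).
Qed.

Lemma TppD (f g : X -> R) : Tpp f -> Tpp g -> Tpp (fun x => f x + g x).
Proof.
apply: Tpp2 => Y a b ca cb y; exact: (continuousD (ca y) (cb y)).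
Qed.

Lemma TppN (f : X -> R) : Tpp f -> Tpp (fun x => - f x).
Proof.
move=> Tf.
have -> : (fun x => - f x) = (fun x => (fun _ => -1) x * f x).
  by apply: funext => x; rewrite mulN1r.
by apply: TppM => //; apply: Tpp_cont => x; exact: cst_continuous.
Qed.

Lemma gen_ideal (I : set (X -> R)) g : Tpp_ideal I -> I g ->
  Tpp_ideal (Tpp_gen g).
Proof.
move=> [ITpp I0 ID IN IM] Ig; have Tg := ITpp _ Ig.
split.
- by move=> _ [h [Th ->]]; exact: TppM.
- exists (fun _ => 0); split; first by apply: Tpp_cont => x; exact: cst_continuous.
  by apply: funext => x; rewrite mul0r.
- move=> _ _ [h1 [T1 ->]] [h2 [T2 ->]]; exists (fun x => h1 x + h2 x); split.
    exact: TppD.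
  by apply: funext => x; rewrite mulrDl.
- move=> _ [h [T1 ->]]; exists (fun x => - h x); split; first exact: TppN.
  by apply: funext => x; rewrite mulNr.
- move=> k _ Tk [h [T1 ->]]; exists (fun x => k x * h x); split; first exact: TppM.
  by apply: funext => x; rewrite mulrA.
Qed.

Lemma min_gen (I : set (X -> R)) g : Tpp_minimal_ideal I -> I g ->
  forall x, g x != 0 -> I = Tpp_gen g.
Proof.
move=> [II Inz Imin] Ig x gx.
have [ITpp I0 ID IN IM] := II.
apply/esym; apply: Imin.
- exact: gen_ideal II Ig.
- exists g; split.
    exists (fun _ => 1); split; first by apply: Tpp_cont => y; exact: cst_continuous.
    by apply: funext => y; rewrite mul1r.
  by move=> g0; move: gx; rewrite g0 eqxx.
- by move=> _ [h [Th ->]]; exact: IM.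
Qed.

End Helpers.
Arguments min_gen {R X I g}.
Arguments TppM {R X f g}.
Arguments Tpp_cont {R X f}.

Theorem theorem5p0 (R : realType) (X : topologicalType) (I : set (X -> R)) :
  tychonoff_space R X -> Tpp_minimal_ideal I ->
  exists e : X -> R,
    [/\ Tpp e, (forall x, e x * e x = e x), I = Tpp_gen e &
        exists x0 : X, ~` Zset e = [set x0]].
Proof.
move=> [hX sep] Imi.
have [[ITpp I0 ID IN IM] [f [If fnz]] _] := Imi.
have [x0 fx0] : exists x0, f x0 != 0.
  apply/not_existsP => H; apply: fnz; apply: funext => x.
  by apply/eqP; apply/negPn/negP => /(fun h => H x h).
have Tf := ITpp _ If.
have If2 : I (fun x => f x * f x) by exact: IM.
have f2x0 : f x0 * f x0 != 0 by rewrite mulf_neq0.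
have := min_gen Imi If2 x0 f2x0.
move=> Ieq; have : Tpp_gen (fun x => f x * f x) f by rewrite -Ieq.
move=> [h [Th fE]].
have fEx : forall x, f x = h x * (f x * f x) by move=> x; rewrite {1}fE.
set e := fun x => h x * f x.
have Te : Tpp e by exact: TppM.
have Ie : I e by exact: IM.
have idem : forall x, e x * e x = e x.
  move=> x; rewrite /e {3}(fEx x); ring.
have ex0 : e x0 != 0.
  apply/negP => /eqP e0; move: fx0.
  have -> : f x0 = e x0 * f x0 by rewrite /e -mulrA -fEx.
  by rewrite e0 mul0r eqxx.
have Ieq2 := min_gen Imi Ie x0 ex0.
exists e; split => //.
exists x0; apply/seteqP; split => y /=; last first.
  by move=> ->; rewrite /Zset /=; apply/eqP.
rewrite /Zset /= => ey.
apply/not_notP => nyx.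
have ey' : e y != 0 by apply/eqP.
have [g [gc gy gx0]] : exists g : X -> R,
    [/\ continuous g, g y = 0 & forall b, [set x0] b -> g b = 1].
  apply: sep; first exact: accessible_closed_set1 (hausdorff_accessible hX) _.
  by move=> /= yx; apply: nyx.
have Ige : I (fun x => g x * e x) by apply: IM => //; exact: Tpp_cont.
have gex0 : g x0 * e x0 != 0 by rewrite gx0 // mul1r.
have := min_gen Imi Ige x0 gex0.
move=> Ieq3; have : Tpp_gen (fun x => g x * e x) e by rewrite -Ieq3.
move=> [k [_ eE]].
have := congr1 (fun F => F y) eE; rewrite /= gy mul0r mulr0 => ey0.
by move: ey'; rewrite ey0 eqxx.
Qed.
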